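(* Let $n$ be a positive odd integer. Then $$ \sum_{k=0}^{n-1}\frac{(aq;q^2)_k\,(-q/a;q^2)_k\, q^{2k}}{(q^2;q^2)_k} \equiv (-1)^{(n-1)/2} q^{(n^2-1)/2} \pmod{(1-aq^n)(a+q^n)}, $$ and $$ \sum_{k=0}^{n-1}\frac{(aq;q^2)_k\,(q/a;q^2)_k\, q^{2k}}{(q^2;q^2)_k} \equiv q^{(n^2-1)/2} \pmod{(1-aq^n)(a-q^n)}. $$
   Context: $a,q$ are indeterminates. The $q$-shifted factorial is $(y;q)_0=1$ and $(y;q)_m=(1-y)(1-yq)\cdots(1-yq^{m-1})$ for $m\geqslant1$. For rational functions $A,B$ and a polynomial $P$, $A\equiv B\pmod P$ means $A-B=P\cdot C/D$ for polynomials $C,D$ with $D$ coprime to $P$. *)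

(* Defs.v *)
From HB Require Import structures.
From mathcomp Require Import all_boot all_order all_algebra.
Set Implicit Arguments. Unset Strict Implicit. Unset Printing Implicit Defensive.
Import Order.TTheory GRing.Theory Num.Theory.
Local Open Scope ring_scope.

(* Bivariate polynomial ring Q[a,q], realised as {poly {poly rat}}:
   the inner variable is a, the outer variable is q. *)
Definition Pol := {poly {poly rat}}.
Definition RF := {fraction Pol}.

Definition toRF (p : Pol) : RF := FracField.tofrac p.

Definition var_a : Pol := ('X : {poly rat})%:P.
Definition var_q : Pol := 'X.
Definition ra : RF := toRF var_a.
Definition rq : RF := toRF var_q.

Definition qpoch (y p : RF) (m : nat) : RF := \prod_(i < m) (1 - y * p ^+ i).

(* coprimality in the (non-PID) ring Q[a,q]: every common divisor is a unit *)
Definition coprimeR (P D : Pol) : Prop :=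
  forall g h1 h2 : Pol, P = g * h1 -> D = g * h2 -> g \is a GRing.unit.

Definition congr_mod (A B : RF) (P : Pol) : Prop :=
  exists C D : Pol, coprimeR P D /\ A - B = toRF P * toRF C / toRF D.

(* Main.v *)
Require Import Defs.
From HB Require Import structures.
From mathcomp Require Import all_boot all_order all_algebra.
From mathcomp Require Import ring zify.
Import GRing.Theory.
Local Open Scope ring_scope.


Local Notation p := (rq ^+ 2).

Lemma toRF_neq0 (x : Pol) : x != 0 -> toRF x != 0.
Proof. by rewrite /toRF tofrac_eq0. Qed.

Lemma ra_neq0 : ra != 0.
Proof. by apply: toRF_neq0; rewrite /var_a polyC_eq0 polyX_eq0. Qed.

Lemma rq_neq0 : rq != 0.
Proof. by apply: toRF_neq0; rewrite /var_q polyX_eq0. Qed.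

Lemma one_sub_rq k : (0 < k)%N -> 1 - rq ^+ k != 0.
Proof.
move=> k0; have -> : 1 - rq ^+ k = toRF (1 - var_q ^+ k).
  by rewrite /rq /toRF rmorphB rmorph1 rmorphXn.
apply: toRF_neq0; rewrite subr_eq0; apply/eqP => H; move: (congr1 (fun z : Pol => size z) H) => /=; clear H.
rewrite size_poly1 /var_q size_polyXn; by case: k k0.
Qed.

Lemma qpoch0 y q : qpoch y q 0 = 1.
Proof. by rewrite /qpoch big_ord0. Qed.

Lemma qpochS_l y q k : qpoch y q k.+1 = (1 - y) * qpoch (y * q) q k.
Proof.
rewrite /qpoch big_ord_recl expr0 mulr1; congr (_ * _).
by apply: eq_bigr => i _; rewrite lift0 exprS mulrA.
Qed.

Lemma qpochS_r y q k : qpoch y q k.+1 = qpoch y q k * (1 - y * q ^+ k).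
Proof. by rewrite /qpoch big_ord_recr. Qed.

Lemma qpoch1 q k : (0 < k)%N -> qpoch 1 q k = 0.
Proof. case: k => [|k _]; first by []. by rewrite qpochS_l subrr mul0r. Qed.

Lemma qpp_neq0 k : qpoch p p k != 0.
Proof.
elim: k => [|k IH]; first by rewrite qpoch0 oner_neq0.
rewrite qpochS_r; apply: mulf_neq0; first exact: IH.
rewrite -exprS -exprM; apply: one_sub_rq.
by rewrite muln_gt0.
Qed.

Lemma algSm (F : fieldType) (u b A B C p : F) (i : nat) : C != 0 -> 1 - p * p ^+ i != 0 ->
 (1 - u) * A * ((1 - b) * B) * p ^+ i.+1 / (C * (1 - p * p ^+ i)) -
 A * (1 - u * p * p ^+ i) * ((1 - b) * B) * p ^+ i.+1 / (C * (1 - p * p ^+ i)) =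
 - (u * (1 - b) * p) * (A * B * p ^+ i / C).
Proof. move=> h1 h2; rewrite exprS; field; by rewrite h1 h2. Qed.

Lemma algchu (F : fieldType) (u b p : F) m : u * p ^+ m.+1 = 1 ->
  - (u * (1 - b) * p) * (b * p) ^+ m + b ^+ m = b ^+ m.+1.
Proof.
move=> Hu; rewrite exprMn.
transitivity (- ((1 - b) * b ^+ m * (u * p ^+ m.+1)) + b ^+ m).
  by rewrite exprS; ring.
by rewrite Hu exprS; ring.
Qed.

Definition Sm N u b := \sum_(k < N) qpoch u p k * qpoch b p k * p ^+ k / qpoch p p k.

Lemma Sm_rec N u b :
  Sm N.+1 u b - Sm N.+1 (u * p) b = - (u * (1 - b) * p) * Sm N (u * p) (b * p).
Proof.
rewrite /Sm !big_ord_recl !qpoch0 opprD addrACA subrr add0r -sumrB mulr_sumr.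
apply: eq_bigr => i _; rewrite lift0.
rewrite (qpochS_l u p i) (qpochS_r (u * p) p i) (qpochS_l b p i) (qpochS_r p p i).
have h1 := qpp_neq0 i.
have h2 : 1 - p * p ^+ i != 0 by rewrite -exprS -exprM; apply: one_sub_rq; rewrite muln_gt0.
exact: algSm h1 h2.
Qed.

Lemma chu m : forall N u b, u * p ^+ m = 1 -> (m < N)%N -> Sm N u b = b ^+ m.
Proof.
elim: m => [|m IH] N u b.
  rewrite expr0 mulr1 => -> ; case: N => [|N _]; first by [].
  rewrite /Sm big_ord_recl big1; last first.
    by move=> i _; rewrite qpoch1; [rewrite !mul0r|].
  by rewrite !qpoch0 expr0 invr1 !mulr1 addr0.
move=> Hu; case: N => [|N HmN]; first by [].
have Hu' : (u * p) * p ^+ m = 1 by rewrite -mulrA -exprS.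
have := Sm_rec N u b.
rewrite (IH N.+1 (u * p) b Hu' (ltnW HmN)) (IH N (u * p) (b * p) Hu' HmN).
move/eqP; rewrite subr_eq => /eqP ->.
exact: algchu.
Qed.


Definition lq (d : {poly rat}) : RF := toRF (d ^:P).

Lemma lqD x y : lq (x + y) = lq x + lq y.
Proof. by rewrite /lq /toRF !rmorphD. Qed.
Lemma lqM x y : lq (x * y) = lq x * lq y.
Proof. by rewrite /lq /toRF !rmorphM. Qed.
Lemma lqN x : lq (- x) = - lq x.
Proof. by rewrite /lq /toRF !rmorphN. Qed.
Lemma lq1 : lq 1 = 1.
Proof. by rewrite /lq /toRF !rmorph1. Qed.
Lemma lq0 : lq 0 = 0.
Proof. by rewrite /lq /toRF !rmorph0. Qed.
Lemma lq_neq0 d : d != 0 -> lq d != 0.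
Proof. by move=> h; rewrite /lq /toRF tofrac_eq0 map_poly_eq0. Qed.

Definition Sq (x : RF) := exists c d, d != 0 /\ x = lq c / lq d.
Definition Sq2 (x : RF) := exists (C : Pol) d, d != 0 /\ x = toRF C / lq d.

Lemma gadd (F : fieldType) (a b c d : F) : b != 0 -> d != 0 -> a / b + c / d = (a * d + c * b) / (b * d).
Proof. by move=> h1 h2; field; rewrite h1 h2. Qed.

Lemma S0 : Sq 0.
Proof. by exists 0, 1; rewrite oner_neq0 lq0 mul0r. Qed.
Lemma S1 : Sq 1.
Proof. by exists 1, 1; rewrite oner_neq0 lq1 divr1. Qed.
Lemma S_add x y : Sq x -> Sq y -> Sq (x + y).
Proof.
move=> [c1 [d1 [h1 ->]]] [c2 [d2 [h2 ->]]].
exists (c1 * d2 + c2 * d1), (d1 * d2); split; first by rewrite mulf_neq0.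
by rewrite lqD !lqM gadd // lq_neq0.
Qed.
Lemma S_opp x : Sq x -> Sq (- x).
Proof. by move=> [c [d [h ->]]]; exists (- c), d; rewrite lqN mulNr. Qed.
Lemma S_mul x y : Sq x -> Sq y -> Sq (x * y).
Proof.
move=> [c1 [d1 [h1 ->]]] [c2 [d2 [h2 ->]]].
exists (c1 * c2), (d1 * d2); split; first by rewrite mulf_neq0.
by rewrite !lqM mulf_div.
Qed.
Lemma S_inv x : Sq x -> Sq (x ^-1).
Proof.
move=> [c [d [h ->]]]; have [->|hc] := eqVneq c 0.
  by rewrite lq0 mul0r invr0; exact: S0.
by exists d, c; split=> //; rewrite invf_div.
Qed.
Lemma S_exp x k : Sq x -> Sq (x ^+ k).
Proof. by move=> h; elim: k => [|k IH]; [rewrite expr0; exact: S1 | rewrite exprS; apply: S_mul]. Qed.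
Lemma S_rq : Sq rq.
Proof. by exists 'X, 1; rewrite oner_neq0 lq1 divr1 /lq map_polyX. Qed.
Lemma S_const (r : rat) : Sq (toRF (r%:P)%:P).
Proof. by exists r%:P, 1; rewrite oner_neq0 lq1 divr1 /lq map_polyC. Qed.

Lemma S2_add x y : Sq2 x -> Sq2 y -> Sq2 (x + y).
Proof.
move=> [c1 [d1 [h1 ->]]] [c2 [d2 [h2 ->]]].
exists (c1 * d2 ^:P + c2 * d1 ^:P), (d1 * d2); split; first by rewrite mulf_neq0.
rewrite lqM gadd ?lq_neq0 //.
by rewrite /toRF /lq !rmorphD !rmorphM.
Qed.
Lemma S2_mul x y : Sq2 x -> Sq2 y -> Sq2 (x * y).
Proof.
move=> [c1 [d1 [h1 ->]]] [c2 [d2 [h2 ->]]].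
exists (c1 * c2), (d1 * d2); split; first by rewrite mulf_neq0.
by rewrite lqM mulf_div /toRF rmorphM.
Qed.
Lemma S_S2 x : Sq x -> Sq2 x.
Proof. by move=> [c [d [h ->]]]; exists c ^:P, d. Qed.
Lemma S2_ra : Sq2 ra.
Proof. by exists var_a, 1; rewrite oner_neq0 lq1 divr1. Qed.

Definition polyS (P : {poly RF}) := forall i, Sq P`_i.

Lemma polyS_C c : Sq c -> polyS c%:P.
Proof. by move=> h i; rewrite coefC; case: (i == 0%N) => //; exact: S0. Qed.
Lemma polyS_X : polyS 'X.
Proof. by move=> i; rewrite coefX; case: (i == 1%N); [exact: S1 | exact: S0]. Qed.
Lemma polyS_add P Q : polyS P -> polyS Q -> polyS (P + Q).
Proof. by move=> h1 h2 i; rewrite coefD; apply: S_add. Qed.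
Lemma polyS_opp P : polyS P -> polyS (- P).
Proof. by move=> h1 i; rewrite coefN; apply: S_opp. Qed.
Lemma polyS_sub P Q : polyS P -> polyS Q -> polyS (P - Q).
Proof. by move=> h1 h2; apply: polyS_add => //; apply: polyS_opp. Qed.
Lemma polyS_mul P Q : polyS P -> polyS Q -> polyS (P * Q).
Proof.
move=> h1 h2 i; rewrite coefM; apply: (big_ind Sq S0 S_add) => j _.
exact: S_mul.
Qed.
Lemma polyS_0 : polyS 0.
Proof. by move=> i; rewrite coef0; exact: S0. Qed.
Lemma polyS_1 : polyS 1.
Proof. by rewrite -polyC1; apply: polyS_C; exact: S1. Qed.
Lemma polyS_sum n (F : 'I_n -> {poly RF}) : (forall i, polyS (F i)) -> polyS (\sum_(i < n) F i).
Proof. by move=> h; apply: (big_ind polyS polyS_0 polyS_add) => i _. Qed.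
Lemma polyS_prod n (F : 'I_n -> {poly RF}) : (forall i, polyS (F i)) -> polyS (\prod_(i < n) F i).
Proof. by move=> h; apply: (big_ind polyS polyS_1 polyS_mul) => i _. Qed.
Lemma polyS_Xn k : polyS ('X ^+ k).
Proof. by elim: k => [|k IH]; [rewrite expr0; exact: polyS_1 | rewrite exprS; apply: polyS_mul => //; exact: polyS_X]. Qed.

Lemma polyS_div h c : polyS (h * ('X - c%:P)) -> Sq c -> polyS h.
Proof.
move=> hp hc.
have key : forall d i, (size h <= i + d)%N -> Sq h`_i.
  elim=> [|d IH] i.
    by rewrite addn0 => hs; rewrite nth_default //; exact: S0.
  rewrite addnS -addSn => /IH hS.
  have := hp i.+1; rewrite mulrBr coefB coefMX coefMC /=.
  move=> h1; have -> : h`_i = (h`_i - h`_i.+1 * c) + h`_i.+1 * c by rewrite subrK.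
  by apply: S_add => //; apply: S_mul.
by move=> i; apply: (key (size h)); rewrite leq_addl.
Qed.

Lemma polyS_horner P : polyS P -> Sq2 P.[ra].
Proof.
elim/poly_ind: P => [|P c IH] hP.
  by rewrite horner0; apply: S_S2; exact: S0.
rewrite hornerMXaddC; apply: S2_add; last first.
  by apply: S_S2; have := hP 0%N; rewrite coefD coefMX coefC /= add0r.
apply: S2_mul; last exact: S2_ra.
apply: IH => i; have := hP i.+1; rewrite coefD coefMX coefC /= addr0.
by [].
Qed.


Lemma mono (R : idomainType) j : forall (G H : {poly R}) (c : R), c != 0 ->
  G * H = c%:P * 'X ^+ j -> exists g0 s, G = g0%:P * 'X ^+ s.
Proof.
elim: j => [|j IH] G H c hc.
  rewrite expr0 mulr1 => E.
  have hG : G != 0 by apply/eqP => h; move: E; rewrite h mul0r => /eqP; rewrite eq_sym polyC_eq0 (negPf hc).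
  have hH : H != 0 by apply/eqP => h; move: E; rewrite h mulr0 => /eqP; rewrite eq_sym polyC_eq0 (negPf hc).
  have := congr1 (fun z : {poly R} => size z) E; rewrite /= size_mul // size_polyC hc.
  move=> hs; exists G`_0, 0%N; rewrite expr0 mulr1; apply: size1_polyC.
  have := size_poly_gt0 H; rewrite hH; have := size_poly_gt0 G; rewrite hG.
  by move: hs; case: (size G) => [|[|[|k]]] //; case: (size H).
move=> E.
have h0 : G.[0] * H.[0] = 0.
  have := congr1 (fun z => z.[0]) E; rewrite /= hornerM => ->.
  by rewrite hornerCM hornerXn expr0n mulr0.
move/eqP: h0; rewrite mulf_eq0 => /orP[] /eqP h0.
  have /factor_theorem [G' EG] : root G 0 by apply/rootP.
  move: EG E; rewrite subr0 => -> E.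
  have E' : G' * H = c%:P * 'X ^+ j.
    apply: (@mulIf _ 'X); first by rewrite polyX_eq0.
    by rewrite -[RHS]mulrA -exprSr -E mulrAC.
  have [g0 [s ->]] := IH _ _ _ hc E'.
  by exists g0, s.+1; rewrite exprSr mulrA.
have /factor_theorem [H' EH] : root H 0 by apply/rootP.
move: EH E; rewrite subr0 => -> E.
have E' : G * H' = c%:P * 'X ^+ j.
  apply: (@mulIf _ 'X); first by rewrite polyX_eq0.
  by rewrite -[RHS]mulrA -exprSr -E mulrA.
exact: IH _ _ _ hc E'.
Qed.

Lemma copP n (er : rat) j (d : {poly rat}) : er != 0 -> d != 0 ->
  coprimeR ((1 - var_a * var_q ^+ n) * (var_a - (er%:P)%:P * var_q ^+ n)) (var_a ^+ j * d ^:P).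
Proof.
move=> her hd g h1 h2 E1 E2.
have sa : swapXY var_a = 'X by rewrite /var_a swapXY_polyC map_polyX.
have sq : swapXY var_q = ('X)%:P by rewrite /var_q swapXY_X.
have se : swapXY ((er%:P)%:P : Pol) = (er%:P)%:P by rewrite swapXY_polyC map_polyC.
have E2' : swapXY g * swapXY h2 = d%:P * 'X ^+ j.
  by rewrite -rmorphM -E2 rmorphM rmorphXn /= sa swapXY_map_polyC mulrC.
have [g0 [s Eg]] := mono _ _ _ _ _ hd E2'.
have E1' : swapXY ((1 - var_a * var_q ^+ n) * (var_a - (er%:P)%:P * var_q ^+ n)) = g0%:P * 'X ^+ s * swapXY h1.
  by rewrite E1 rmorphM /= Eg.
have sP : swapXY ((1 - var_a * var_q ^+ n) * (var_a - (er%:P)%:P * var_q ^+ n)) =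
   (- (er%:P * 'X ^+ n))%:P + (1 + er%:P * 'X ^+ n * 'X ^+ n)%:P * 'X - ('X ^+ n)%:P * 'X ^+ 2.
  rewrite !rmorphM !rmorphB !rmorph1 /= !rmorphM !rmorphXn /= sa sq se.
  rewrite polyCN polyCD !polyCM polyC1 !polyC_exp; ring.
rewrite sP in E1'.
have hB : er%:P * 'X ^+ n != 0 :> {poly rat}.
  by rewrite mulf_neq0 // ?polyC_eq0 // expf_neq0 // polyX_eq0.
case: s Eg E1' => [|s] Eg E1'; last first.
  have := congr1 (fun z => z.[0]) E1'; rewrite /= !hornerE /= expr0n /=.
  rewrite !mulr0 subr0 mul0r => /eqP; rewrite oppr_eq0.
  by rewrite (negPf hB).
rewrite expr0 mulr1 in Eg E1'.
have c0 := congr1 (fun z : {poly {poly rat}} => z`_0) E1'; have c1 := congr1 (fun z : {poly {poly rat}} => z`_1) E1'.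
move: c0 c1; rewrite /= !coefCM !coefE /= => c0 c1.
have u : g0 * ((swapXY h1)`_1 + 'X ^+ n * (swapXY h1)`_0) = 1.
  rewrite mulrDr mulrCA -c0 -c1; ring.
have -> : g = swapXY (g0%:P) by rewrite -Eg swapXYK.
rewrite swapXY_polyC; apply: rmorph_unit; apply/unitrPr.
by exists ((swapXY h1)`_1 + 'X ^+ n * (swapXY h1)`_0).
Qed.




Lemma g_fac (F : fieldType) (x e r : F) k : x != 0 ->
  x - e * r ^+ (2 * k + 1) = x * (1 - e * (r / x) * (r ^+ 2) ^+ k).
Proof. by move=> hx; rewrite -exprM addn1 exprS; field. Qed.

Lemma g_comb (F : fieldType) (x A B c1 c2 : F) j k :
  x ^+ j * A * (x ^+ k * B) * (c1 * c2) = x ^+ (j + k) * (A * B * c1 * c2).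
Proof. by rewrite exprD; ring. Qed.

Lemma g_ediv (F : fieldType) (e a c : F) : e != 0 -> e * (a / (e * c)) = a / c.
Proof. move=> he; have [->|hc] := eqVneq c 0; first by rewrite mulr0 invr0 !mulr0.
by field; rewrite he hc. Qed.

Lemma g_u (F : fieldType) (x : F) m : x != 0 -> x / x ^+ (2 * m).+1 * (x ^+ 2) ^+ m = 1.
Proof. by move=> hx; rewrite -exprM exprS; field; rewrite expf_neq0. Qed.

Lemma g_fin {F : fieldType} {T R a h y e : F} {j : nat} : a != 0 -> y != 0 ->
  a ^+ j * (T - R) = h * (a - y^-1) * (a - e * y) ->
  T - R = ((1 - a * y) * (a - e * y)) * (h * (- y^-1)) / a ^+ j.
Proof.
move=> ha hy E.
have haj : a ^+ j != 0 by rewrite expf_neq0.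
have -> : T - R = (a ^+ j * (T - R)) / a ^+ j by field.
rewrite E; field; by rewrite haj hy.
Qed.

Lemma g_fin' {F : fieldType} {T R a h y e x1 x2 : F} {j : nat} : a != 0 -> y != 0 ->
  a ^+ j * (T - R) = h * (a - x2) * (a - x1) -> x2 = y^-1 -> x1 = e * y ->
  T - R = ((1 - a * y) * (a - e * y)) * (h * (- y^-1)) / a ^+ j.
Proof. by move=> ha hy E h2 h1; apply: g_fin => //; rewrite E h1 h2. Qed.

Lemma hornerMXX (R : comNzRingType) (H : {poly R}) a b x :
  (H * ('X - a%:P) * ('X - b%:P)).[x] = H.[x] * (x - a) * (x - b).
Proof. by rewrite !hornerM !hornerXsubC. Qed.

Lemma horner1XC (R : comNzRingType) (c x : R) : (1 - 'X * c%:P).[x] = 1 - x * c.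
Proof. by rewrite !hornerE. Qed.

Lemma g_last (F : fieldType) (P C d a : F) : a != 0 -> d != 0 -> P * (C / d) / a = P * C / (a * d).
Proof. by move=> ha hd; field; rewrite ha hd. Qed.

Lemma g_sh (F : fieldType) (x Q c : F) k : x ^+ k * Q * (x * c) = x ^+ k.+1 * (Q * c).
Proof. by rewrite exprSr; ring. Qed.

Lemma prodX (x e : RF) k : x != 0 ->
  \prod_(i < k) (x - e * rq ^+ (2 * i + 1)) = x ^+ k * qpoch (e * (rq / x)) p k.
Proof.
move=> hx; elim: k => [|k IH]; first by rewrite big_ord0 qpoch0 expr0 mulr1.
by rewrite big_ord_recr /= IH qpochS_r (g_fac _ _ _ _ _ hx) g_sh.
Qed.

Lemma prod1 (x : RF) k :
  qpoch (x * rq) p k = \prod_(i < k) (1 - x * rq ^+ (2 * i + 1)).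
Proof. by apply: eq_bigr => i _; rewrite -exprM addn1 exprS mulrA. Qed.

Lemma S_qpoch y k : Sq y -> Sq (qpoch y p k).
Proof.
move=> hy; apply: (big_ind Sq S1 S_mul) => i _.
by apply: S_add; [exact: S1 | apply: S_opp; apply: S_mul => //; apply: S_exp; apply: S_exp; exact: S_rq].
Qed.

Lemma g_x12 {F : fieldType} {y e : F} : e * e = 1 -> y != 0 -> y^-1 = e * y -> y * y = e.
Proof.
move=> he hy h; have h2 : y * (e * y) = 1 by rewrite -h mulfV.
transitivity (e * (y * (e * y))); last by rewrite h2 mulr1.
have -> : e * (y * (e * y)) = (e * e) * (y * y) by ring.
by rewrite he mul1r.
Qed.

Lemma gen (m : nat) (er : rat) : er * er = 1 ->
  congr_mod
    (\sum_(k < (2 * m).+1) qpoch (ra * rq) (rq ^+ 2) k * qpoch (toRF (er%:P)%:P * (rq / ra)) (rq ^+ 2) k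
                  * rq ^+ (2 * k) / qpoch (rq ^+ 2) (rq ^+ 2) k)
    (toRF (er%:P)%:P ^+ m * rq ^+ (2 * m * m + 2 * m))
    ((1 - var_a * var_q ^+ (2 * m).+1) * (var_a - (er%:P)%:P * var_q ^+ (2 * m).+1)).
Proof.
move=> her.
have her0 : er != 0.
  by apply/eqP => h; move: her; rewrite h mul0r => /eqP; rewrite eq_sym oner_eq0.
have hP : toRF ((1 - var_a * var_q ^+ (2 * m).+1) * (var_a - (er%:P)%:P * var_q ^+ (2 * m).+1)) =
  (1 - ra * rq ^+ (2 * m).+1) * (ra - toRF (er%:P)%:P * rq ^+ (2 * m).+1).
  by rewrite /ra /rq /toRF !(rmorphM, rmorphB, rmorph1, rmorphXn).
set e := toRF (er%:P)%:P.
set n := (2 * m).+1.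
set R := e ^+ m * rq ^+ (2 * m * m + 2 * m).
have he : e != 0 by apply: toRF_neq0; rewrite !polyC_eq0.
have hrqn : rq ^+ n != 0 by apply: expf_neq0; exact: rq_neq0.
pose T x := \sum_(k < n) qpoch (x * rq) p k * qpoch (e * (rq / x)) p k * rq ^+ (2 * k) / qpoch p p k.
have TS : forall x u b, x * rq = b -> e * (rq / x) = u -> T x = Sm n u b.
  move=> x u b h1 h2; rewrite /T /Sm; apply: eq_bigr => k _.
  by rewrite h1 h2 exprM (mulrC (qpoch b p k)).
have TS2 : forall x u b, x * rq = u -> e * (rq / x) = b -> T x = Sm n u b.
  move=> x u b h1 h2; rewrite /T /Sm; apply: eq_bigr => k _.
  by rewrite h1 h2 exprM.
have hb : (e * rq ^+ n.+1) ^+ m = R.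
  by rewrite exprMn -exprM /R; congr (_ * rq ^+ _); rewrite /n; lia.
have hu : rq / rq ^+ n * p ^+ m = 1 by apply: g_u; exact: rq_neq0.
have hmn : (m < n)%N by rewrite /n; lia.
pose x1 := e * rq ^+ n.
pose x2 := (rq ^+ n)^-1.
have T1 : T x1 = R.
  rewrite (TS x1 (rq / rq ^+ n) (e * rq ^+ n.+1)).
  - by rewrite -hb; apply: chu.
  - by rewrite /x1 exprSr mulrA.
  - rewrite /x1; exact: g_ediv _ _ _ _ he.
have T2 : T x2 = R.
  rewrite (TS2 x2 (rq / rq ^+ n) (e * rq ^+ n.+1)).
  - by rewrite -hb; apply: chu.
  - exact: mulrC.
  - by rewrite /x2 invrK exprS.
have Ex1 : x1 = e * rq ^+ n by [].
have Ex2 : x2 = (rq ^+ n)^-1 by [].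
clearbody x1 x2.
pose G : {poly RF} := \sum_(k < n) ('X ^+ (2 * m - k) * \prod_(i < k) (1 - 'X * (rq ^+ (2 * i + 1))%:P)
     * \prod_(i < k) ('X - (e * rq ^+ (2 * i + 1))%:P) * (rq ^+ (2 * k) / qpoch p p k)%:P) - R%:P * 'X ^+ (2 * m).
have GE : forall x, x != 0 -> G.[x] = x ^+ (2 * m) * (T x - R).
  move=> x hx; rewrite /G hornerD hornerN horner_sum mulrBr mulr_sumr hornerCM hornerXn (mulrC R).
  congr (_ - _); apply: eq_bigr => k _.
  rewrite !hornerM hornerXn hornerC !horner_prod.
  rewrite [X in _ * X * _](eq_bigr (fun i : 'I_k => x - e * rq ^+ (2 * i + 1))); last by move=> i _; exact: hornerXsubC.
  rewrite (eq_bigr (fun i : 'I_k => 1 - x * rq ^+ (2 * i + 1))); last by move=> i _; exact: horner1XC.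
  rewrite (prodX _ _ _ hx) -prod1.
  have hk : (k <= 2 * m)%N by have := ltn_ord k; rewrite /n ltnS.
  by rewrite g_comb (subnK hk).
have Srq : forall j, Sq (rq ^+ j) by move=> j; apply: S_exp; exact: S_rq.
have Se : Sq e by exact: S_const.
have SR : Sq R by apply: S_mul; [apply: S_exp; exact: Se | exact: Srq].
have SG : polyS G.
  apply: polyS_sub; last by apply: polyS_mul; [apply: polyS_C; exact: SR | exact: polyS_Xn].
  apply: polyS_sum => k; apply: polyS_mul; last first.
    apply: polyS_C; apply: S_mul; [exact: Srq | apply: S_inv; apply: S_qpoch; exact: Srq].
  apply: polyS_mul; [apply: polyS_mul; [exact: polyS_Xn | apply: polyS_prod => i] | apply: polyS_prod => i].
    by apply: polyS_sub; [exact: polyS_1 | apply: polyS_mul; [exact: polyS_X | apply: polyS_C; exact: Srq]].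
  by apply: polyS_sub; [exact: polyS_X | apply: polyS_C; apply: S_mul; [exact: Se | exact: Srq]].
have hx1 : x1 != 0 by rewrite Ex1; exact: mulf_neq0 he hrqn.
have hx2 : x2 != 0 by rewrite Ex2 invr_eq0; exact: hrqn.
have ee : e * e = 1 by rewrite /e /toRF -rmorphM -!polyCM her !polyC1 rmorph1.
have hx12 : x2 - x1 != 0.
  rewrite Ex2 Ex1 subr_eq0; apply/eqP => h.
  have h2 := g_x12 ee hrqn h.
  have : toRF ('X ^+ (n + n) - (er%:P)%:P) == 0.
    by rewrite /toRF rmorphB rmorphXn -/var_q -/(toRF var_q) -/rq exprD h2 subrr.
  rewrite /toRF tofrac_eq0 -size_poly_eq0 size_XnsubC //.
have r1 : root G x1 by apply/rootP; rewrite (GE _ hx1) T1 subrr mulr0.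
move/factor_theorem: r1 => [H1 EH1].
have SH1 : polyS H1 by apply: (polyS_div H1 x1); [rewrite -EH1; exact: SG | rewrite Ex1; exact: S_mul Se (Srq n)].
have r2 : root H1 x2.
  have := GE x2 hx2; rewrite T2 subrr mulr0 EH1 hornerM hornerXsubC => /eqP.
  by rewrite mulf_eq0 (negPf hx12) orbF.
move/factor_theorem: r2 => [H2 EH2].
have SH2 : polyS H2 by apply: (polyS_div H2 x2); [rewrite -EH2; exact: SH1 | rewrite Ex2; exact: S_inv _ (Srq n)].
have GE2 : G.[ra] = H2.[ra] * (ra - x2) * (ra - x1).
  by rewrite EH1 EH2; exact: hornerMXX.
have E := etrans (esym (GE ra ra_neq0)) GE2.
have E' : T ra - R = ((1 - ra * rq ^+ n) * (ra - e * rq ^+ n)) * (H2.[ra] * (- (rq ^+ n)^-1)) / ra ^+ (2 * m).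
  exact: (g_fin' ra_neq0 hrqn E Ex2 Ex1).
have [C [d [hd Ey]]] : Sq2 (H2.[ra] * (- (rq ^+ n)^-1)).
  apply: S2_mul; [exact: polyS_horner | apply: S_S2; apply: S_opp; apply: S_inv; exact: Srq].
exists C, (var_a ^+ (2 * m) * d ^:P); split; first exact: copP.
change (T ra - R = toRF ((1 - var_a * var_q ^+ n) * (var_a - (er%:P)%:P * var_q ^+ n)) * toRF C / toRF (var_a ^+ (2 * m) * d ^:P)).
rewrite E' Ey hP.
have -> : toRF (var_a ^+ (2 * m) * d^:P) = ra ^+ (2 * m) * lq d.
  by rewrite /ra /lq /toRF !(rmorphM, rmorphXn).
apply: g_last; [apply: expf_neq0; exact: ra_neq0 | exact: lq_neq0].
Qed.

Theorem theorem4p5 (n : nat) (hn : (0 < n)%N) (hodd : odd n) :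
  congr_mod
    (\sum_(k < n) qpoch (ra * rq) (rq ^+ 2) k * qpoch (- (rq / ra)) (rq ^+ 2) k
                  * rq ^+ (2 * k) / qpoch (rq ^+ 2) (rq ^+ 2) k)
    ((-1) ^+ ((n - 1) %/ 2) * rq ^+ ((n ^ 2 - 1) %/ 2))
    ((1 - var_a * var_q ^+ n) * (var_a + var_q ^+ n))
  /\
  congr_mod
    (\sum_(k < n) qpoch (ra * rq) (rq ^+ 2) k * qpoch (rq / ra) (rq ^+ 2) k
                  * rq ^+ (2 * k) / qpoch (rq ^+ 2) (rq ^+ 2) k)
    (rq ^+ ((n ^ 2 - 1) %/ 2))
    ((1 - var_a * var_q ^+ n) * (var_a - var_q ^+ n)).
Proof.
have [m hm] : exists m, n = (2 * m).+1.
  exists n./2; rewrite -{1}(odd_double_half n) hodd mul2n.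
  by [].
subst n.
have e1 : (((2 * m).+1 - 1) %/ 2 = m)%N by rewrite subn1 /= mulKn.
have e2 : (((2 * m).+1 ^ 2 - 1) %/ 2 = 2 * m * m + 2 * m)%N.
  have -> : ((2 * m).+1 ^ 2 - 1 = (2 * m * m + 2 * m) * 2)%N by lia.
  by rewrite mulnK.
rewrite e1 e2; split.
  have em1 : toRF ((-1 : rat)%:P)%:P = -1 by rewrite /toRF !polyCN !polyC1 rmorphN1.
  have h1 : (-1 : rat) * -1 = 1 by rewrite mulrNN mulr1.
  have := gen m (-1) h1.
  by rewrite em1 mulN1r polyCN polyC1 polyCN polyC1 mulN1r opprK.
have e1' : toRF ((1 : rat)%:P)%:P = 1 by rewrite /toRF !polyC1 rmorph1.
have h1 : (1 : rat) * 1 = 1 by rewrite mulr1.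
have := gen m 1 h1.
by rewrite e1' mul1r expr1n mul1r !polyC1 mul1r.
Qed.
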